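(* Let $\mathbf{a}=(a_1,a_2,a_3,a_4)\in\mathbb{N}^4$ with $a_1\le a_2\le a_3\le a_4$, let $A=a_1+a_2+a_3+a_4$, let $m\ge3$ be an integer, $a\in\mathbb{N}$, $b\in\mathbb{Z}$, and $N=\frac{m-2}{2}(a-b)+b$. Suppose the system $$a=a_1x_1^2+a_2x_2^2+a_3x_3^2+a_4x_4^2,\qquad b=a_1x_1+a_2x_2+a_3x_3+a_4x_4$$ has an integer solution $(x_1,x_2,x_3,x_4)\in\mathbb{Z}^4$. Then: (i) $a\equiv b\pmod 2$, $Aa-b^2\ge0$, and $N=P_{m,\mathbf{a}}(x_1,x_2,x_3,x_4)$; (ii) if $b\ge\sqrt{a_2+a_3+a_4}\cdot\sqrt a$, then $N$ is represented by $P_{m,\mathbf{a}}$ over $\mathbb{N}_0$.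
   Context: $P_m(x)=\frac{m-2}{2}(x^2-x)+x$ for integers $x$, and $P_{m,\mathbf{a}}(\mathbf{x})=\sum_{i=1}^4a_iP_m(x_i)$. $N$ is represented by $P_{m,\mathbf{a}}$ over $\mathbb{N}_0$ if $N=P_{m,\mathbf{a}}(\mathbf{x})$ for some $\mathbf{x}\in\mathbb{N}_0^4$, where $\mathbb{N}_0=\{0,1,2,\dots\}$. *)

(* Defs.v *)
From Stdlib Require Import ZArith Reals.
Open Scope R_scope.

Definition Pm (m : Z) (x : R) : R :=
  (IZR m - 2) / 2 * (x ^ 2 - x) + x.

Definition Pma (m a1 a2 a3 a4 : Z) (x1 x2 x3 x4 : R) : R :=
  IZR a1 * Pm m x1 + IZR a2 * Pm m x2 + IZR a3 * Pm m x3 + IZR a4 * Pm m x4.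

Definition represented_N0 (m a1 a2 a3 a4 : Z) (N : R) : Prop :=
  exists y1 y2 y3 y4 : nat,
    N = Pma m a1 a2 a3 a4 (INR y1) (INR y2) (INR y3) (INR y4).

(* Main.v *)
Require Import Defs.
From Stdlib Require Import ZArith Reals Lia Psatz.

Lemma cs3 (p q r y z w : Z) : (0<=p)%Z -> (0<=q)%Z -> (0<=r)%Z ->
  ((p*y+q*z+r*w)*(p*y+q*z+r*w) <= (p+q+r)*(p*(y*y)+q*(z*z)+r*(w*w)))%Z.
Proof.
  intros. assert (E : ((p+q+r)*(p*(y*y)+q*(z*z)+r*(w*w)) - (p*y+q*z+r*w)*(p*y+q*z+r*w)
    = p*q*((y-z)*(y-z)) + p*r*((y-w)*(y-w)) + q*r*((z-w)*(z-w)))%Z) by ring.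
  assert (0 <= p*q*((y-z)*(y-z)))%Z by (apply Z.mul_nonneg_nonneg; [apply Z.mul_nonneg_nonneg; lia | apply Z.square_nonneg]).
  assert (0 <= p*r*((y-w)*(y-w)))%Z by (apply Z.mul_nonneg_nonneg; [apply Z.mul_nonneg_nonneg; lia | apply Z.square_nonneg]).
  assert (0 <= q*r*((z-w)*(z-w)))%Z by (apply Z.mul_nonneg_nonneg; [apply Z.mul_nonneg_nonneg; lia | apply Z.square_nonneg]).
  lia.
Qed.

Lemma even_xx (x : Z) : exists c, (x*x = x + 2*c)%Z.
Proof.
  destruct (Z.Even_or_Odd x) as [[q ->]|[q ->]].
  - exists (q*(2*q-1))%Z; ring.
  - exists (q*(2*q+1))%Z; ring.
Qed.

Lemma nonneg_all (a1 a2 a3 a4 a b x1 x2 x3 x4 : Z) :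
  (1 <= a1)%Z -> (a1 <= a2)%Z -> (a2 <= a3)%Z -> (a3 <= a4)%Z ->
  a = (a1 * (x1*x1) + a2 * (x2*x2) + a3 * (x3*x3) + a4 * (x4*x4))%Z ->
  b = (a1 * x1 + a2 * x2 + a3 * x3 + a4 * x4)%Z ->
  (0 <= b)%Z -> ((a2+a3+a4)*a <= b*b)%Z ->
  (0 <= x1 /\ 0 <= x2 /\ 0 <= x3 /\ 0 <= x4)%Z.
Proof.
  intros H1 H2 H3 H4 Ha Hb Hb0 Hs.
  assert (P1 : (0 <= a1*(x1*x1))%Z) by nia.
  assert (P2 : (0 <= a2*(x2*x2))%Z) by nia.
  assert (P3 : (0 <= a3*(x3*x3))%Z) by nia.
  assert (P4 : (0 <= a4*(x4*x4))%Z) by nia.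
  repeat split; apply Z.nlt_ge; intro Hx.
  - pose proof (cs3 a2 a3 a4 x2 x3 x4 ltac:(lia) ltac:(lia) ltac:(lia)) as C.
    set (T := (a2*x2+a3*x3+a4*x4)%Z) in *.
    assert (b < T)%Z by nia.
    assert (b*b < T*T)%Z by nia.
    assert ((a2+a3+a4)*(a2*(x2*x2)+a3*(x3*x3)+a4*(x4*x4)) <= (a2+a3+a4)*a)%Z by nia.
    lia.
  - pose proof (cs3 a1 a3 a4 x1 x3 x4 ltac:(lia) ltac:(lia) ltac:(lia)) as C.
    set (T := (a1*x1+a3*x3+a4*x4)%Z) in *.
    assert (b < T)%Z by nia.
    assert (b*b < T*T)%Z by nia.
    assert ((a1+a3+a4)*(a1*(x1*x1)+a3*(x3*x3)+a4*(x4*x4)) <= (a2+a3+a4)*a)%Z by nia.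
    lia.
  - pose proof (cs3 a1 a2 a4 x1 x2 x4 ltac:(lia) ltac:(lia) ltac:(lia)) as C.
    set (T := (a1*x1+a2*x2+a4*x4)%Z) in *.
    assert (b < T)%Z by nia.
    assert (b*b < T*T)%Z by nia.
    assert ((a1+a2+a4)*(a1*(x1*x1)+a2*(x2*x2)+a4*(x4*x4)) <= (a2+a3+a4)*a)%Z by nia.
    lia.
  - pose proof (cs3 a1 a2 a3 x1 x2 x3 ltac:(lia) ltac:(lia) ltac:(lia)) as C.
    set (T := (a1*x1+a2*x2+a3*x3)%Z) in *.
    assert (b < T)%Z by nia.
    assert (b*b < T*T)%Z by nia.
    assert ((a1+a2+a3)*(a1*(x1*x1)+a2*(x2*x2)+a3*(x3*x3)) <= (a2+a3+a4)*a)%Z by nia.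
    lia.
Qed.

Theorem lemma3p1 (a1 a2 a3 a4 m a b x1 x2 x3 x4 : Z) :
  (1 <= a1)%Z -> (a1 <= a2)%Z -> (a2 <= a3)%Z -> (a3 <= a4)%Z ->
  (3 <= m)%Z -> (1 <= a)%Z ->
  a = (a1 * x1 ^ 2 + a2 * x2 ^ 2 + a3 * x3 ^ 2 + a4 * x4 ^ 2)%Z ->
  b = (a1 * x1 + a2 * x2 + a3 * x3 + a4 * x4)%Z ->
  let A := (a1 + a2 + a3 + a4)%Z in
  let N : R := ((IZR m - 2) / 2 * (IZR a - IZR b) + IZR b)%R in
  ( (a mod 2 = b mod 2)%Z
    /\ (0 <= A * a - b ^ 2)%Z
    /\ N = Pma m a1 a2 a3 a4 (IZR x1) (IZR x2) (IZR x3) (IZR x4) )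
  /\ ((IZR b >= sqrt (IZR (a2 + a3 + a4)) * sqrt (IZR a))%R ->
      represented_N0 m a1 a2 a3 a4 N).
Proof.
  intros H1 H2 H3 H4 Hm Ha1 Ha Hb A N.
  rewrite !Z.pow_2_r in Ha. rewrite Z.pow_2_r.
  assert (HN : N = Pma m a1 a2 a3 a4 (IZR x1) (IZR x2) (IZR x3) (IZR x4)).
  { unfold N, Pma, Pm. rewrite Ha, Hb.
    repeat rewrite ?plus_IZR, ?mult_IZR. field. }
  split; [split; [|split]|].
  - destruct (even_xx x1) as [c1 E1]. destruct (even_xx x2) as [c2 E2].
    destruct (even_xx x3) as [c3 E3]. destruct (even_xx x4) as [c4 E4].
    assert (a = b + (a1*c1+a2*c2+a3*c3+a4*c4)*2)%Z as ->.
    { rewrite Ha, Hb, E1, E2, E3, E4. ring. }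
    apply Z_mod_plus_full.
  - unfold A.
    assert (E : ((a1+a2+a3+a4)*a - b*b
      = a1*a2*((x1-x2)*(x1-x2)) + a1*a3*((x1-x3)*(x1-x3)) + a1*a4*((x1-x4)*(x1-x4))
      + a2*a3*((x2-x3)*(x2-x3)) + a2*a4*((x2-x4)*(x2-x4)) + a3*a4*((x3-x4)*(x3-x4)))%Z)
      by (rewrite Ha, Hb; ring).
    rewrite E.
    repeat apply Z.add_nonneg_nonneg; (apply Z.mul_nonneg_nonneg; [apply Z.mul_nonneg_nonneg; lia | apply Z.square_nonneg]).
  - exact HN.
  - intro Hs.
    assert (Hsq1 := sqrt_pos (IZR (a2+a3+a4))).
    assert (Hsq2 := sqrt_pos (IZR a)).
    assert (Hb0 : (0 <= IZR b)%R) by nra.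
    assert (Hbb : (IZR (a2+a3+a4) * IZR a <= IZR b * IZR b)%R).
    { rewrite <- (sqrt_sqrt (IZR (a2+a3+a4))) by (apply IZR_le; lia).
      rewrite <- (sqrt_sqrt (IZR a)) by (apply IZR_le; lia).
      set (s := sqrt (IZR (a2+a3+a4))) in *. set (t := sqrt (IZR a)) in *.
      replace (s*s*(t*t))%R with ((s*t)*(s*t))%R by ring.
      apply Rmult_le_compat; try lra; apply Rmult_le_pos; lra. }
    rewrite <- !mult_IZR in Hbb. apply le_IZR in Hbb. apply le_IZR in Hb0.
    destruct (nonneg_all a1 a2 a3 a4 a b x1 x2 x3 x4 H1 H2 H3 H4 Ha Hb Hb0 Hbb)
      as [G1 [G2 [G3 G4]]].
    exists (Z.to_nat x1), (Z.to_nat x2), (Z.to_nat x3), (Z.to_nat x4).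
    rewrite !INR_IZR_INZ, !Z2Nat.id by assumption. exact HN.
Qed.
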